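(* Let $n$ and $0<n_1<\cdots<n_d<n$ be integers with $m_1=n_1$, $m_k=n_k-n_{k-1}$ ($2\le k\le d$), $m_{d+1}=n-n_d$, and equip $\mathrm{Flag}(n_1,\dots,n_d;n)=\{(VJ_1V^{\mathsf T},\dots,VJ_{d+1}V^{\mathsf T}):V\in\mathrm{O}(n)\}\subseteq(\mathbb{R}^{n\times n})^{d+1}$ with the Riemannian metric induced by the Frobenius inner product. Let $V(t)$ be a differentiable curve in $\mathrm{O}(n)$, $c(t)=V(t)(J_1,\dots,J_{d+1})V(t)^{\mathsf T}$, and let $\Lambda(t)\in\mathfrak{so}(n)$ be such that $\dot V(t)=V(t)\Lambda(t)$, with $\Lambda(k,k)(t)\equiv0$ for $k=1,\dots,d+1$. Then $c(t)$ is a geodesic if and only if $V(t)=V(0)\exp(t\Lambda(0))$.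
   Context: $J_k=\operatorname{diag}(-I_{m_1},\dots,-I_{m_{k-1}},I_{m_k},-I_{m_{k+1}},\dots,-I_{m_{d+1}})$ for $k=1,\dots,d+1$. $V(X_1,\dots,X_{d+1})V^{\mathsf T}$ denotes $(VX_1V^{\mathsf T},\dots,VX_{d+1}V^{\mathsf T})$. For an $n\times n$ matrix $M$, $M(p,q)$ denotes its $(p,q)$ block in the partition $n=m_1+\cdots+m_{d+1}$. A curve $c$ is a geodesic iff the orthogonal projection of $\ddot c(t)$ onto $\mathbb{T}_{c(t)}\mathrm{Flag}$ vanishes for all $t$. *)

(* Defs.v *)
From mathcomp Require Import all_boot all_order all_algebra.
From mathcomp Require Import all_classical all_reals all_analysis.
Set Implicit Arguments. Unset Strict Implicit. Unset Printing Implicit Defensive.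
Import Order.TTheory GRing.Theory Num.Theory.
Local Open Scope ring_scope.

Section FlagDefs.
Variable R : realType.

Definition mx_derivable_at (p q : nat) (f : R -> 'M[R]_(p, q)) (t : R) : Prop :=
  forall i j, derivable (fun s => f s i j) t 1.

Definition mx_deriv (p q : nat) (f : R -> 'M[R]_(p, q)) (t : R) : 'M[R]_(p, q) :=
  \matrix_(i, j) (derive1 (fun s => f s i j) t).

Definition expm (n : nat) (A : 'M[R]_n) : 'M[R]_n :=
  \matrix_(i, j) limn (fun N : nat => \sum_(k < N) ((A ^+ k) i j / (k`!)%:R)).

(* block index (0-based) of row/column index i for the partition given by
   0 < ns_1 < ... < ns_d < n : block k (0-based) = {i | ns_k <= i < ns_{k+1}} *)
Definition blk {d : nat} (ns : 'I_d -> nat) (i : nat) : nat :=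
  #|[set j : 'I_d | (ns j <= i)%N]|.

Definition Jmat {n d : nat} (ns : 'I_d -> nat) (k : 'I_d.+1) : 'M[R]_n :=
  \matrix_(i, j) (if i == j then (if blk ns i == k then 1 else -1) else 0).

Definition mxtuple (n d : nat) := 'I_d.+1 -> 'M[R]_n.

Definition in_flag {n d : nat} (ns : 'I_d -> nat) (P : mxtuple n d) : Prop :=
  exists V : 'M[R]_n, V^T *m V = 1%:M /\ forall k, P k = V *m Jmat ns k *m V^T.

Definition frob (n d : nat) (X Y : mxtuple n d) : R :=
  \sum_(k < d.+1) \tr ((X k)^T *m Y k).

Definition tangent_flag {n d : nat} (ns : 'I_d -> nat) (P X : mxtuple n d) : Prop :=
  exists g : R -> mxtuple n d,
    (forall s, in_flag ns (g s)) /\ g 0 = P /\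
    (forall k, mx_derivable_at (fun s => g s k) 0) /\
    (forall k, X k = mx_deriv (fun s => g s k) 0).

(* geodesic: twice differentiable curve in Flag whose acceleration has
   vanishing orthogonal projection onto the tangent space, i.e. is
   Frobenius-orthogonal to every tangent vector *)
Definition geodesic {n d : nat} (ns : 'I_d -> nat) (c : R -> mxtuple n d) : Prop :=
  (forall t, in_flag ns (c t)) /\
  (forall t k, mx_derivable_at (fun s => c s k) t) /\
  (forall t k, mx_derivable_at (fun s => mx_deriv (fun u => c u k) s) t) /\
  (forall t X, tangent_flag ns (c t) X ->
     frob (fun k => mx_deriv (fun s => mx_deriv (fun u => c u k) s) t) X = 0).

End FlagDefs.

(* Main.v *)
Require Import Defs.
From mathcomp Require Import all_boot all_order all_algebra.
From mathcomp Require Import all_classical all_reals all_analysis.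
From mathcomp Require ring lra.
Import Order.TTheory GRing.Theory Num.Theory.
Local Open Scope ring_scope.

Module PropHelpers.
Import numFieldNormedType.Exports.
Import ring lra.
Set Implicit Arguments. Unset Strict Implicit.

Section MxCalc.
Variable R : realType.
Variable n : nat.

Definition mxD (F : R -> 'M[R]_n) (t : R) (L : 'M[R]_n) :=
  forall i j, is_derive t (1:R) (fun s => F s i j) (L i j).

Lemma mxD_derivable F t L : mxD F t L -> mx_derivable_at F t.
Proof. by move=> h i j; case: (h i j). Qed.

Lemma mxD_deriv F t L : mxD F t L -> mx_deriv F t = L.
Proof. by move=> h; apply/matrixP => i j; rewrite mxE derive1E; case: (h i j). Qed.

Lemma mxD_of F t : mx_derivable_at F t -> mxD F t (mx_deriv F t).
Proof. by move=> h i j; rewrite mxE derive1E; exact: derivableP. Qed.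

Lemma mxD_cst (M : 'M[R]_n) t : mxD (fun _ => M) t 0.
Proof. move=> i j; rewrite mxE; exact: is_derive_cst. Qed.

Lemma mxD_mul F G t F' G' : mxD F t F' -> mxD G t G' ->
  mxD (fun s => F s *m G s) t (F' *m G t + F t *m G').
Proof.
move=> hF hG i j.
have -> : (fun s => (F s *m G s) i j) = \sum_(l < n) (fun s => F s i l * G s l j).
  by apply/funext => s; rewrite mxE fct_sumE.
have := @is_derive_sum _ _ _ n (fun l s => F s i l * G s l j) t 1
  (fun l => F t i l *: G' l j + G t l j *: F' i l)
  (fun l => is_deriveM (hF i l) (hG l j)).
move=> H; apply: (is_derive_eq H).
rewrite !mxE -big_split /=; apply: eq_bigr => l _.
rewrite addrC; congr (_ + _); rewrite mulrC //.
Qed.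

Lemma mxD_tr F t F' : mxD F t F' -> mxD (fun s => (F s)^T) t F'^T.
Proof.
move=> hF i j.
have -> : (fun s => (F s)^T i j) = (fun s => F s j i) by apply/funext => s; rewrite mxE.
by rewrite mxE; exact: hF.
Qed.

Lemma mxD_add F G t F' G' : mxD F t F' -> mxD G t G' ->
  mxD (fun s => F s + G s) t (F' + G').
Proof.
move=> hF hG i j.
have -> : (fun s => (F s + G s) i j) = (fun s => F s i j) + (fun s => G s i j).
  by apply/funext => s; rewrite mxE.
by rewrite mxE; exact: is_deriveD.
Qed.

Lemma mxD_sub F G t F' G' : mxD F t F' -> mxD G t G' ->
  mxD (fun s => F s - G s) t (F' - G').
Proof.
move=> hF hG i j.
have -> : (fun s => (F s - G s) i j) = (fun s => F s i j) - (fun s => G s i j).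
  by apply/funext => s; rewrite !mxE.
by rewrite !mxE; exact: is_deriveB.
Qed.

Lemma mxD_sum m (F : 'I_m -> R -> 'M[R]_n) t (F' : 'I_m -> 'M[R]_n) :
  (forall k, mxD (F k) t (F' k)) -> mxD (fun s => \sum_k F k s) t (\sum_k F' k).
Proof.
move=> hF i j.
have -> : (fun s => (\sum_k F k s) i j) = \sum_k (fun s => F k s i j).
  by apply/funext => s; rewrite summxE fct_sumE.
rewrite summxE; apply: is_derive_sum => k; exact: hF.
Qed.

Lemma mxD_scal (f : R -> R) (df : R) (M : 'M[R]_n) (t : R) : is_derive t (1:R) f df ->
  mxD (fun s => f s *: M) t (df *: M).
Proof.
move=> hf i j.
have -> : (fun s => (f s *: M) i j) = M i j *: f.
  by apply/funext => s; rewrite !mxE /= mulrC.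
rewrite mxE mulrC; exact: is_deriveZ.
Qed.

Lemma mxD_eq F t L1 L2 : mxD F t L1 -> L1 = L2 -> mxD F t L2.
Proof. by move=> h <-. Qed.

Lemma mxD_unique F t L1 L2 : mxD F t L1 -> mxD F t L2 -> L1 = L2.
Proof. by move=> h1 h2; rewrite -(mxD_deriv h1) -(mxD_deriv h2). Qed.

Lemma mxD_const_fun F (M : 'M[R]_n) t : (forall s, F s = M) -> mxD F t 0.
Proof.
move=> h; have -> : F = (fun _ => M) by apply/funext => s; exact: h.
exact: mxD_cst.
Qed.

Lemma mxD_tr_derive F t F' : mxD F t F' ->
  is_derive t 1 (fun s => \tr (F s)) (\tr F').
Proof.
move=> hF.
have -> : (fun s => \tr (F s)) = \sum_i (fun s => F s i i).
  by apply/funext => s; rewrite fct_sumE.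
by apply: is_derive_sum => i; exact: hF.
Qed.

Lemma mxD_conj W t W' (M : 'M[R]_n) : mxD W t W' ->
  mxD (fun s => W s *m M *m (W s)^T) t
      (W' *m M *m (W t)^T + W t *m M *m W'^T).
Proof.
move=> hW.
apply: mxD_eq.
  apply: mxD_mul; last exact: mxD_tr hW.
  by apply: mxD_mul; [exact: hW | exact: mxD_cst].
by rewrite mulmx0 addr0.
Qed.

Lemma mxD_conjL V t (L M : 'M[R]_n) : mxD V t (V t *m L) ->
  mxD (fun s => V s *m M *m (V s)^T) t
      (V t *m (L *m M + M *m L^T) *m (V t)^T).
Proof.
move=> hV; apply: mxD_eq; first exact: mxD_conj hV.
by rewrite trmx_mul !mulmxA mulmxDr mulmxDl !mulmxA.
Qed.

End MxCalc.


Section Expm.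
Variable R : realType.
Variable n : nat.
Variable A : 'M[R]_n.

Let a := \sum_i \sum_j `|A i j|.
Let a_ge0 : 0 <= a.
Proof. by apply: sumr_ge0 => i _; apply: sumr_ge0. Qed.

Let col_le_a j : \sum_l `|A l j| <= a.
Proof.
apply: ler_sum => l _.
by rewrite (bigD1 j) //= lerDl sumr_ge0.
Qed.

Lemma powA_bound k i j : `|(A ^+ k) i j| <= a ^+ k.
Proof.
elim: k i j => [|k IH] i j.
  by rewrite expr0 mxE; case: (i == j); rewrite /= ?normr1 ?normr0.
rewrite exprSr -mulmxE mxE.
apply: (le_trans (ler_norm_sum _ _ _)).
apply: (@le_trans _ _ (\sum_l a ^+ k * `|A l j|)).
  by apply: ler_sum => l _; rewrite normrM ler_wpM2r.
by rewrite -mulr_sumr exprSr ler_wpM2l // exprn_ge0.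
Qed.

Definition cm i j m := fun k : nat => (A ^+ (k + m)) i j / k`!%:R.

Lemma cm_cvg i j m (x : R) : cvgn (pseries (cm i j m) x).
Proof.
rewrite /pseries; apply: normed_cvg.
apply: (@series_le_cvg _ _ (fun k => a ^+ m * exp_coeff (a * `|x|) k)).
- by move=> k; rewrite /= normr_ge0.
- by move=> k; rewrite /exp_coeff /= mulr_ge0 ?exprn_ge0 ?divr_ge0 ?exprn_ge0 ?mulr_ge0.
- move=> k; rewrite /exp_coeff /cm /= !normrM normfV normr_nat normrX.
  apply: (@le_trans _ _ (a ^+ (k + m) * (k`!%:R)^-1 * `|x| ^+ k)).
    by rewrite ler_wpM2r ?exprn_ge0 // ler_wpM2r ?invr_ge0 // powA_bound.
  by rewrite exprD exprMn le_eqVlt; apply/orP; left; apply/eqP; ring.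
- have := @is_cvg_seriesZ _ _ (a ^+ m) (is_cvg_series_exp_coeff (a * `|x|)).
  by [].
Qed.

Lemma cm_diffs i j m : pseries_diffs (cm i j m) = cm i j m.+1.
Proof.
apply/funext => k; rewrite /pseries_diffs /cm factS natrM invfM addSnnS.
have h : (k.+1)%:R != 0 :> R by rewrite pnatr_eq0.
by rewrite mulrCA mulVKf.
Qed.

Lemma exprZ_mx (t : R) (B : 'M[R]_n) k : (t *: B) ^+ k = t ^+ k *: B ^+ k.
Proof.
elim: k => [|k IH]; first by rewrite !expr0 scale1r.
by rewrite !exprS IH -!mulmxE -scalemxAl -scalemxAr scalerA.
Qed.

Lemma expm_entry (t : R) i j : expm (t *: A) i j = limn (pseries (cm i j 0) t).
Proof.
rewrite mxE.
have -> : (fun N : nat => \sum_(k < N) ((t *: A) ^+ k) i j / k`!%:R) = pseries (cm i j 0) t.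
  apply/funext => N; rewrite /pseries /series /= big_mkord.
  by apply: eq_bigr => k _; rewrite exprZ_mx mxE /cm addn0; ring.
by [].
Qed.

Lemma expm_is_derive i j (t : R) :
  is_derive t 1 (fun s => expm (s *: A) i j) ((expm (t *: A) *m A) i j).
Proof.
have -> : (fun s => expm (s *: A) i j) = (fun s => limn (pseries (cm i j 0) s)).
  by apply/funext => s; rewrite expm_entry.
have tK : `|t| < Num.norm (`|t| + 1) by rewrite [X in _ < X]ger0_norm ?addr_ge0 // ltrDl.
have C1 : cvgn (pseries (pseries_diffs (cm i j 0)) (`|t| + 1)).
  by rewrite cm_diffs; exact: cm_cvg.
have C2 : cvgn (pseries (pseries_diffs (pseries_diffs (cm i j 0))) (`|t| + 1)).
  by rewrite !cm_diffs; exact: cm_cvg.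
have H := @pseries_snd_diffs R (cm i j 0) (`|t| + 1) t (@cm_cvg i j 0 _) C1 C2 tK.
apply: (is_derive_eq H).
rewrite cm_diffs mxE.
under eq_bigr do rewrite expm_entry.
have -> : pseries (cm i j 1) t = (fun N => \sum_l (pseries (cm i l 0) t N * A l j)).
  apply/funext => N; rewrite /pseries /series /=.
  under [RHS]eq_bigr do rewrite mulr_suml.
  rewrite exchange_big /=; apply: eq_bigr => k _.
  rewrite /cm addn1 addn0 exprSr -mulmxE mxE mulr_suml mulr_suml.
  by apply: eq_bigr => l _; ring.
apply: cvg_lim => //.
apply: (@cvg_big _ _ +%R 0 xpredT (@add_continuous _)) => // l _.
by apply: cvgMr_tmp; exact: cm_cvg.
Qed.

Lemma expm_zero : expm (0 : 'M[R]_n) = 1%:M.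
Proof.
apply/matrixP => i j; rewrite mxE [RHS]mxE.
apply: lim_near_cst => //.
near=> N.
have N1 : (0 < N)%N by near: N; exists 1%N.
rewrite -(prednK N1).
rewrite big_ord_recl /= expr0 mxE fact0 divr1 big1 ?addr0 // => k _.
by rewrite exprS mul0r mxE mul0r.
Unshelve. all: by end_near.
Qed.

End Expm.


Lemma m1m1 (R : realType) : (-1 - 1 : R) <> 0. Proof. lra. Qed.
Lemma p1p1 (R : realType) : (1 + 1 : R) <> 0. Proof. lra. Qed.
Lemma m1p1 (R : realType) : (-1 : R) != 1. Proof. apply/eqP; lra. Qed.
Lemma p1m1 (R : realType) : (1 : R) != -1. Proof. apply/eqP; lra. Qed.

Section Alg.
Variable R : realType.
Variables n d : nat.
Variable ns : 'I_d -> nat.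

Definition sgnk (k : 'I_d.+1) (i : 'I_n) : R := if blk ns i == k then 1 else -1.
Local Notation J k := (@Jmat R n d ns k).

Lemma Jmat_mulr (M : 'M[R]_n) k i j : (M *m J k) i j = M i j * sgnk k j.
Proof.
rewrite mxE (bigD1 j) //= big1 ?addr0.
  by rewrite mxE eqxx.
by move=> l /negPf hl; rewrite mxE hl mulr0.
Qed.

Lemma Jmat_mull (M : 'M[R]_n) k i j : (J k *m M) i j = sgnk k i * M i j.
Proof.
rewrite mxE (bigD1 i) //= big1 ?addr0.
  by rewrite mxE eqxx.
by move=> l /negPf hl; rewrite mxE eq_sym hl mul0r.
Qed.

Lemma sig_cases k i : (sgnk k i = 1 /\ blk ns i = k) \/ (sgnk k i = -1 /\ blk ns i <> k).
Proof. by rewrite /sgnk; case: eqP => h; [left|right]. Qed.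

Lemma Jmat_sq k : J k *m J k = 1%:M.
Proof.
apply/matrixP => i j; rewrite Jmat_mull !mxE.
case: eqP => [->|_]; last by rewrite !mulr0.
by rewrite /sgnk; case: ifP => _; rewrite ?mulr1 ?mulrN1 ?opprK.
Qed.

Lemma Jmat_tr k : (J k)^T = J k.
Proof.
apply/matrixP => i j; rewrite !mxE eq_sym.
by case: eqP => // ->.
Qed.

Lemma blk_le (i : 'I_n) : (blk ns i < d.+1)%N.
Proof.
rewrite ltnS /blk; apply: (leq_trans (max_card _)); by rewrite card_ord.
Qed.

Lemma sum_sig i : \sum_k sgnk k i = 1 - d%:R.
Proof.
pose k0 : 'I_d.+1 := Ordinal (blk_le i).
rewrite (bigD1 k0) //= /sgnk eqxx.
rewrite (eq_bigr (fun _ => -1)); last first.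
  move=> k hk; case: eqP => // h; exfalso; move/negP: hk; apply.
  by apply/eqP/val_inj; rewrite /= h.
rewrite sumr_const cardC1 card_ord /=.
by rewrite mulNrn.
Qed.

Lemma sum_Jmat : \sum_k J k = (1 - d%:R)%:M.
Proof.
apply/matrixP => i j; rewrite summxE !mxE.
case: eqP => [->|h].
  by rewrite mulr1n -(sum_sig j); apply: eq_bigr => k _; rewrite mxE eqxx.
by rewrite mulr0n big1 // => k _; rewrite mxE; case: eqP.
Qed.

Lemma orthC (W : 'M[R]_n) : W^T *m W = 1%:M -> W *m W^T = 1%:M.
Proof. exact: mulmx1C. Qed.

Lemma tr_conj (W X : 'M[R]_n) : W^T *m W = 1%:M -> \tr (W *m X *m W^T) = \tr X.
Proof. by move=> h; rewrite mxtrace_mulC mulmxA h mul1mx. Qed.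

Lemma tr_entry (A B : 'M[R]_n) : \tr (A^T *m B) = \sum_p \sum_q A p q * B p q.
Proof.
rewrite /mxtrace; under eq_bigr do rewrite mxE.
rewrite exchange_big /=; apply: eq_bigr => p _.
by apply: eq_bigr => q _; rewrite mxE.
Qed.

Definition Xk (L : 'M[R]_n) k := L *m J k + J k *m L^T.
Definition Nk (L : 'M[R]_n) k := L *m Xk L k + Xk L k *m L^T.

Lemma skew_entry (L : 'M[R]_n) : L^T = - L -> forall p q, L q p = - L p q.
Proof.
by move=> h p q; have := congr1 (fun M : 'M[R]_n => M p q) h; rewrite !mxE.
Qed.

Lemma Xk_entry L k p q : Xk L k p q = L p q * sgnk k q + sgnk k p * L q p.
Proof. by rewrite mxE Jmat_mulr Jmat_mull mxE. Qed.

Lemma Nk_entry L (hs : L^T = - L) k p q :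
  Nk L k p q = \sum_l L p l * L l q * (sgnk k p + sgnk k q - 2 * sgnk k l).
Proof.
have sk := skew_entry hs.
rewrite /Nk mxE !mxE -big_split /=; apply: eq_bigr => l _.
rewrite !Xk_entry mxE (sk l q) (sk p l); ring.
Qed.


Lemma Nk_off L (hs : L^T = - L)
  (hh : forall p q : 'I_n, blk ns p = blk ns q -> L p q = 0) k p q :
  sgnk k p + sgnk k q = 0 -> Nk L k p q = 2 * (L *m L) p q.
Proof.
move=> h; rewrite Nk_entry // mxE mulr_sumr; apply: eq_bigr => l _.
rewrite h sub0r.
case: (sig_cases k l) => [[-> hl]|[-> hl]]; last by ring.
case: (sig_cases k p) => [[hp1 hp]|[hp1 hp]].
  by rewrite (hh p l) ?hp ?hl // !mul0r mulr0.
case: (sig_cases k q) => [[hq1 hq]|[hq1 hq]].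
  by rewrite (hh l q) ?hq ?hl // !(mul0r, mulr0).
by exfalso; rewrite hp1 hq1 in h; exact: m1m1 h.
Qed.

Lemma normal_alg L (hs : L^T = - L)
  (hh : forall p q : 'I_n, blk ns p = blk ns q -> L p q = 0)
  (W : 'M[R]_n) (hW : W^T *m W = 1%:M) (Y : 'I_d.+1 -> 'M[R]_n)
  (hY1 : forall k p q, sgnk k p + sgnk k q != 0 -> Y k p q = 0)
  (hY2 : forall p q, \sum_k Y k p q = 0) :
  \sum_k \tr ((W *m Nk L k *m W^T)^T *m (W *m Y k *m W^T)) = 0.
Proof.
have e k : \tr ((W *m Nk L k *m W^T)^T *m (W *m Y k *m W^T)) = \tr ((Nk L k)^T *m Y k).
  rewrite !trmx_mul trmxK !mulmxA -(mulmxA (W *m (Nk L k)^T) W^T W) hW mulmx1.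
  by rewrite -(mulmxA W) tr_conj.
under eq_bigr do rewrite e tr_entry.
rewrite exchange_big /= big1 // => p _.
rewrite exchange_big /= big1 // => q _.
rewrite (eq_bigr (fun k => 2 * (L *m L) p q * Y k p q)).
  by rewrite -mulr_sumr hY2 mulr0.
move=> k _; have [h|h] := eqVneq (sgnk k p + sgnk k q) 0.
  by rewrite Nk_off.
by rewrite hY1 // !mulr0.
Qed.

Definition Kmx (a b : 'I_n) : 'M[R]_n := delta_mx a b - delta_mx b a.

Lemma sum_delta (F : 'I_n -> 'I_n -> R) a b :
  \sum_p \sum_q F p q * delta_mx a b p q = F a b.
Proof.
rewrite (bigD1 a) //= [X in _ + X]big1 ?addr0.
  rewrite (bigD1 b) //= big1 ?addr0; first by rewrite mxE !eqxx mulr1.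
  by move=> q hq; rewrite mxE eqxx (negPf hq) mulr0.
by move=> p hp; apply: big1 => q _; rewrite mxE (negPf hp) mulr0.
Qed.

Lemma trK (M : 'M[R]_n) k a b :
  \tr (M^T *m (Kmx a b *m J k - J k *m Kmx a b)) = (M a b + M b a) * (sgnk k b - sgnk k a).
Proof.
rewrite tr_entry.
have -> : \sum_p \sum_q M p q * (Kmx a b *m J k - J k *m Kmx a b) p q =
  \sum_p \sum_q (M p q * (sgnk k q - sgnk k p)) * delta_mx a b p q -
  \sum_p \sum_q (M p q * (sgnk k q - sgnk k p)) * delta_mx b a p q.
  rewrite -sumrB; apply: eq_bigr => p _; rewrite -sumrB; apply: eq_bigr => q _.
  have -> : (Kmx a b *m J k - J k *m Kmx a b) p q =
    (Kmx a b *m J k) p q - (J k *m Kmx a b) p q by rewrite !mxE.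
  by rewrite Jmat_mulr Jmat_mull /Kmx !mxE; ring.
rewrite !sum_delta; ring.
Qed.

Lemma sumN_zero L (hs : L^T = - L)
  (hh : forall p q : 'I_n, blk ns p = blk ns q -> L p q = 0) a b :
  \sum_k (Nk L k a b + Nk L k b a) * (sgnk k b - sgnk k a) = 0.
Proof.
rewrite (eq_bigr (fun k => (2 * (L *m L) a b + 2 * (L *m L) b a) * (sgnk k b - sgnk k a))).
  by rewrite -mulr_sumr sumrB !sum_sig subrr mulr0.
move=> k _; have [h|h] := eqVneq (sgnk k b) (sgnk k a).
  by rewrite h subrr !mulr0.
have h2 : sgnk k a + sgnk k b = 0.
  move: h; case: (sig_cases k a) => [[-> _]|[-> _]];
    case: (sig_cases k b) => [[-> _]|[-> _]]; rewrite ?eqxx //; by rewrite ?subrr ?addrN ?addNr.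
rewrite Nk_off // Nk_off //; by rewrite addrC.
Qed.

End Alg.


Section Givens.
Variable R : realType.
Variable n : nat.

Definition Tm (K P : 'M[R]_n) (x y z : R) : 'M[R]_n := x *: 1%:M + y *: K + z *: P.

Lemma mulTm (K P : 'M[R]_n) (hKK : K *m K = P) (hKP : K *m P = - K)
  (hPK : P *m K = - K) (hPP : P *m P = - P) x1 y1 z1 x2 y2 z2 :
  Tm K P x1 y1 z1 *m Tm K P x2 y2 z2 =
  Tm K P (x1 * x2) (x1 * y2 + y1 * x2 - y1 * z2 - z1 * y2)
         (x1 * z2 + z1 * x2 + y1 * y2 - z1 * z2).
Proof.
rewrite /Tm !mulmxDl !mulmxDr -!scalemxAl -!scalemxAr !scalerA.
rewrite !mul1mx !mulmx1 hKK hKP hPK hPP.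
by apply/matrixP => i j; rewrite !mxE; ring.
Qed.

Lemma trTm (K P : 'M[R]_n) (hK : K^T = - K) (hP : P^T = P) x y z :
  (Tm K P x y z)^T = Tm K P x (- y) z.
Proof.
rewrite /Tm !linearD /= !linearZ /= tr_scalar_mx hK hP.
by apply/matrixP => i j; rewrite !mxE; ring.
Qed.

Variables (a b : 'I_n).
Hypothesis hab : a != b.

Let K := Kmx R a b.
Let P := K *m K.

Lemma K_tr : K^T = - K.
Proof. by rewrite /K /Kmx linearB /= !trmx_delta opprB. Qed.

Lemma P_tr : P^T = P.
Proof. by rewrite /P trmx_mul K_tr mulmxN mulNmx opprK. Qed.

Lemma KK_eq : K *m K = - (delta_mx a a + delta_mx b b).
Proof.
rewrite /K /Kmx mulmxBl !mulmxBr !mul_delta_mx_cond !eqxx eq_sym (negPf hab) !mulr0n.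
by rewrite !mulr1n subr0 sub0r opprD.
Qed.

Lemma KP_eq : K *m P = - K.
Proof.
rewrite /P KK_eq /K /Kmx mulmxN mulmxBl !mulmxDr !mul_delta_mx_cond !eqxx eq_sym (negPf hab).
by rewrite !mulr0n !mulr1n addr0 add0r opprB.
Qed.

Lemma PK_eq : P *m K = - K.
Proof. by rewrite /P -mulmxA KP_eq. Qed.

Lemma PP_eq : P *m P = - P.
Proof. by rewrite {1}/P -mulmxA KP_eq mulmxN. Qed.

Definition Qg (s : R) := Tm K P 1 (sin s) (1 - cos s).

Lemma Qg_orth s : (Qg s)^T *m Qg s = 1%:M.
Proof.
rewrite /Qg trTm ?K_tr ?P_tr // (mulTm (erefl _) KP_eq PK_eq PP_eq).
have h := cos2Dsin2 s.
apply/matrixP => i j.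
have e : forall x : R, x = x + (1 - (cos s ^+ 2 + sin s ^+ 2)) * P i j.
  by move=> x; rewrite h subrr mul0r addr0.
rewrite [RHS]e /Tm !mxE; ring.
Qed.

Lemma Qg0 : Qg 0 = 1%:M.
Proof. by rewrite /Qg /Tm sin0 cos0 subrr !scale0r !addr0 scale1r. Qed.

Lemma Qg_deriv : mxD Qg 0 K.
Proof.
have -> : Qg = fun s => (1 *: 1%:M + sin s *: K) + (1 - cos s) *: P by [].
apply: mxD_eq.
  apply: mxD_add; first apply: mxD_add.
      exact: mxD_cst.
    by apply: mxD_scal; exact: is_derive_sin.
  by apply: mxD_scal.
by rewrite cos0 sin0 !oppr0 mulr0 scale0r addr0 add0r scale1r.
Qed.

End Givens.


Lemma mul_self_ge0 (R : realType) (x : R) : 0 <= x * x.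
Proof. by rewrite -expr2 sqr_ge0. Qed.

Section Geo.
Variable R : realType.
Variables n d : nat.
Variable ns : 'I_d -> nat.
Local Notation J k := (@Jmat R n d ns k).

Lemma givens_tangent (V : 'M[R]_n) (hV : V^T *m V = 1%:M) a b (hab : a != b) :
  tangent_flag ns (fun k => V *m J k *m V^T)
    (fun k => V *m (Kmx R a b *m J k - J k *m Kmx R a b) *m V^T).
Proof.
have hW : mxD (fun s => V *m Qg a b s) 0 (V *m Kmx R a b).
  by apply: mxD_eq; [apply: mxD_mul; [exact: mxD_cst | exact: Qg_deriv] | rewrite mul0mx add0r].
exists (fun s k => V *m Qg a b s *m J k *m (V *m Qg a b s)^T).
split; first move=> s.
  exists (V *m Qg a b s); split => //.
  by rewrite trmx_mul mulmxA -(mulmxA _ V^T) hV mulmx1 Qg_orth.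
split; first by apply/funext => k; rewrite Qg0 mulmx1.
split; first by move=> k; apply: mxD_derivable; exact: mxD_conj hW.
move=> k; rewrite (mxD_deriv (mxD_conj _ hW)) Qg0 mulmx1 trmx_mul K_tr.
by rewrite mulNmx mulmxN mulmxBr mulmxBl !mulmxA.
Qed.

Lemma flag_sq (P : mxtuple R n d) : in_flag ns P -> forall k, P k *m P k = 1%:M.
Proof.
move=> [W [hW hP]] k; rewrite hP.
rewrite -!mulmxA (mulmxA W^T) hW mul1mx (mulmxA (J k)) Jmat_sq mul1mx.
exact: orthC.
Qed.

Lemma flag_sum (P : mxtuple R n d) : in_flag ns P -> \sum_k P k = (1 - d%:R)%:M.
Proof.
move=> [W [hW hP]].
under eq_bigr do rewrite hP.
rewrite -mulmx_suml -mulmx_sumr sum_Jmat mul_mx_scalar -scalemxAl (orthC hW).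
by rewrite scalemx1.
Qed.

Lemma tr_conj2 (V C Z : 'M[R]_n) :
  \tr (C^T *m (V *m Z *m V^T)) = \tr ((V^T *m C *m V)^T *m Z).
Proof.
rewrite !trmx_mul trmxK !mulmxA mxtrace_mulC !mulmxA.
by [].
Qed.

Lemma is_derive_uniq (f : R -> R) (t v1 v2 : R) :
  is_derive t 1 f v1 -> is_derive t 1 f v2 -> v1 = v2.
Proof. by case=> _ <-; case=> _ <-. Qed.

Lemma ode_unique (V W : R -> 'M[R]_n) (L : 'M[R]_n) (hs : L^T = - L)
  (hV : forall t, mxD V t (V t *m L)) (hW : forall t, mxD W t (W t *m L))
  (h0 : V 0 = W 0) : forall t, V t = W t.
Proof.
move=> t.
pose D s := V s - W s.
have hD s : mxD D s (D s *m L).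
  by apply: mxD_eq; [exact: mxD_sub (hV s) (hW s) | rewrite /D mulmxBl].
pose phi s := \tr ((D s)^T *m D s).
have hphi (s : R) : is_derive s (1:R) phi 0.
  apply: is_derive_eq; first exact: mxD_tr_derive (mxD_mul (mxD_tr (hD s)) (hD s)).
  rewrite trmx_mul hs !mulNmx -mulmxA mxtraceD linearN /=.
  by rewrite [\tr (L *m _)]mxtrace_mulC -mulmxA addNr.
have phi0 : phi 0 = 0 by rewrite /phi /D h0 subrr trmx0 mul0mx mxtrace0.
have phit : phi t = 0 by rewrite (@is_derive_0_is_cst _ phi t 0 hphi).
move: phit; rewrite /phi tr_entry => hz.
apply/matrixP => p q.
have hz1 : \sum_q1 D t p q1 * D t p q1 = 0.
  apply: (psumr_eq0P _ hz) => // p1 _; apply: sumr_ge0 => q1 _; exact: mul_self_ge0.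
have h3 : D t p q * D t p q = 0.
  by apply: (psumr_eq0P _ hz1) => // q1 _; exact: mul_self_ge0.
by move/eqP: h3; rewrite mulf_eq0 orbb /D !mxE subr_eq0 => /eqP.
Qed.

End Geo.


Lemma zid (V : zmodType) (x y z : V) : y = x + y + z + (- x + - z).
Proof. by rewrite [x + y]addrC -!addrA [x + (z + _)]addrCA addNKr subrr addr0. Qed.

Lemma is_deriveMl' (R : realType) (f : R -> R) (c t df : R) :
  is_derive t (1:R) f df -> is_derive t (1:R) (fun s => c * f s) (c * df).
Proof. by move=> h; exact: is_deriveZ. Qed.

Section Main.
Variable R : realType.
Variables n d : nat.
Variable ns : 'I_d -> nat.
Local Notation J k := (@Jmat R n d ns k).

Lemma addmxE (A B : 'M[R]_n) i j : (A + B) i j = A i j + B i j.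
Proof. by rewrite mxE. Qed.

Lemma geo_of_const (V : R -> 'M[R]_n) (L0 : 'M[R]_n)
  (hVorth : forall t, (V t)^T *m V t = 1%:M) (hs : L0^T = - L0)
  (hh : forall p q : 'I_n, blk ns p = blk ns q -> L0 p q = 0)
  (hV0 : forall t, mxD V t (V t *m L0)) :
  geodesic ns (fun t (k : 'I_d.+1) => V t *m J k *m (V t)^T).
Proof.
have orthV t : V t *m (V t)^T = 1%:M := orthC (hVorth t).
have hc k t : mxD (fun s => V s *m J k *m (V s)^T) t (V t *m Xk ns L0 k *m (V t)^T).
  exact: mxD_conjL (hV0 t).
have hc' k : mx_deriv (fun s => V s *m J k *m (V s)^T) = fun s => V s *m Xk ns L0 k *m (V s)^T.
  by apply/funext => s; rewrite (mxD_deriv (hc k s)).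
have hc2 k t : mxD (fun s => V s *m Xk ns L0 k *m (V s)^T) t (V t *m Nk ns L0 k *m (V t)^T).
  exact: mxD_conjL (hV0 t).
split; first by move=> t; exists (V t); split.
split; first by move=> t k; exact: mxD_derivable (hc k t).
split; first by move=> t k; rewrite hc'; exact: mxD_derivable (hc2 k t).
move=> t X [g [gflag [g0 [gd gX]]]].
have E2 k : mx_deriv (fun s => mx_deriv (fun u => V u *m J k *m (V u)^T) s) t =
    V t *m Nk ns L0 k *m (V t)^T.
  by rewrite hc' (mxD_deriv (hc2 k t)).
rewrite /frob; under eq_bigr => k _ do rewrite E2.
have hg k : mxD (fun s => g s k) 0 (X k) by rewrite gX; exact: mxD_of (gd k).
have g0k k : g 0 k = V t *m J k *m (V t)^T by rewrite g0.
have P1 k : X k *m g 0 k + g 0 k *m X k = 0.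
  apply: (mxD_unique (mxD_mul (hg k) (hg k))).
  by apply: (mxD_const_fun (M := 1%:M)) => s; exact: flag_sq (gflag s) k.
have P2 : \sum_k X k = 0.
  apply: (mxD_unique (mxD_sum (F := fun k s => g s k) hg)).
  by apply: (mxD_const_fun (M := (1 - d%:R)%:M)) => s; exact: flag_sum (gflag s).
pose Y k := (V t)^T *m X k *m V t.
have XY k : X k = V t *m Y k *m (V t)^T.
  by rewrite /Y !mulmxA orthV mul1mx -mulmxA orthV mulmx1.
under eq_bigr => k _ do rewrite XY.
apply: normal_alg => //.
- move=> k p q hpq.
  have e : Y k *m J k + J k *m Y k = 0.
    have := congr1 (fun M : 'M[R]_n => (V t)^T *m M *m V t) (P1 k).
    rewrite /= mulmx0 mul0mx => <-; rewrite g0k /Y.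
    rewrite mulmxDr mulmxDl !mulmxA hVorth mul1mx.
    by rewrite -!mulmxA hVorth !mulmx1 !mulmxA.
  have := congr1 (fun M : 'M[R]_n => M p q) e.
  rewrite /= addmxE Jmat_mulr Jmat_mull (_ : (0 : 'M[R]_n) p q = 0) ?mxE // => /eqP.
  rewrite [sgnk _ _ k p * _]mulrC -mulrDr mulf_eq0 addrC (negPf hpq) orbF.
  by move/eqP.
- move=> p q.
  have e : \sum_k Y k p q = ((V t)^T *m (\sum_k X k) *m V t) p q.
    by rewrite mulmx_sumr mulmx_suml summxE.
  by rewrite e P2 mulmx0 mul0mx mxE.
Qed.


Lemma key_deriv (V Lam : R -> 'M[R]_n)
  (hVorth : forall t, (V t)^T *m V t = 1%:M)
  (hVD : forall t, mxD V t (V t *m Lam t))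
  (hLskew : forall t, (Lam t)^T = - Lam t)
  (hLdiag : forall t (i j : 'I_n), blk ns i = blk ns j -> Lam t i j = 0)
  (g3 : forall t k, mx_derivable_at (fun s => mx_deriv (fun u => V u *m J k *m (V u)^T) s) t)
  (g4 : forall t X, tangent_flag ns (fun k => V t *m J k *m (V t)^T) X ->
     frob (fun k => mx_deriv (fun s => mx_deriv (fun u => V u *m J k *m (V u)^T) s) t) X = 0)
  t (a b : 'I_n) (hab : blk ns a != blk ns b) : is_derive t (1:R) (fun s => Lam s a b) 0.
Proof.
have orthV s : V s *m (V s)^T = 1%:M := orthC (hVorth s).
pose Dk k := fun s => mx_deriv (fun u => V u *m J k *m (V u)^T) s.
have DkE k s : Dk k s = V s *m Xk ns (Lam s) k *m (V s)^T.
  exact: mxD_deriv (mxD_conjL (J k) (hVD s)).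
pose Bf k s := (V s)^T *m Dk k s *m V s.
have BfE k s : Bf k s = Xk ns (Lam s) k.
  by rewrite /Bf DkE !mulmxA hVorth mul1mx -mulmxA hVorth mulmx1.
pose C k := mx_deriv (Dk k) t.
have hDk k : mxD (Dk k) t (C k) := mxD_of (g3 t k).
pose Bp k := ((V t *m Lam t)^T *m Dk k t + (V t)^T *m C k) *m V t +
             (V t)^T *m Dk k t *m (V t *m Lam t).
have hB k : mxD (Bf k) t (Bp k).
  exact: mxD_mul (mxD_mul (mxD_tr (hVD t)) (hDk k)) (hVD t).
have eC k : (V t)^T *m C k *m V t = Bp k + Nk ns (Lam t) k.
  have hX : (V t)^T *m Dk k t *m V t = Xk ns (Lam t) k by exact: BfE.
  have hL : Lam t = - (Lam t)^T by rewrite hLskew opprK.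
  rewrite /Bp /Nk trmx_mul mulmxDl -!mulmxA (mulmxA (V t)^T) (mulmxA _ (Dk k t)) hX.
  rewrite (mulmxA (V t)^T (Dk k t)) (mulmxA _ (V t)) hX.
  have e1 : Lam t *m Xk ns (Lam t) k = - ((Lam t)^T *m Xk ns (Lam t) k).
    by rewrite hLskew mulNmx opprK.
  have e2 : Xk ns (Lam t) k *m (Lam t)^T = - (Xk ns (Lam t) k *m Lam t).
    by rewrite hLskew mulmxN.
  by rewrite e1 e2 -zid.
have hab' : a != b by apply: contraNneq hab => ->.
have F0 := g4 t _ (givens_tangent ns (hVorth t) hab').
rewrite /frob in F0.
pose dl k := sgnk R ns k b - sgnk R ns k a.
have S0 : \sum_k ((Bp k + Nk ns (Lam t) k) a b + (Bp k + Nk ns (Lam t) k) b a) * dl k = 0.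
  by apply: (etrans _ F0); apply: eq_bigr => k _; rewrite tr_conj2 eC trK.
have S1 : \sum_k (Bp k a b + Bp k b a) * dl k = 0.
  have -> : \sum_k (Bp k a b + Bp k b a) * dl k =
    \sum_k ((Bp k + Nk ns (Lam t) k) a b + (Bp k + Nk ns (Lam t) k) b a) * dl k -
    \sum_k (Nk ns (Lam t) k a b + Nk ns (Lam t) k b a) * dl k.
    by rewrite -sumrB; apply: eq_bigr => k _; rewrite !addmxE; ring.
  by rewrite S0 (sumN_zero (hLskew t) (hLdiag t) a b) subrr.
have hk k s : Bf k s a b + Bf k s b a = 2 * dl k * Lam s a b.
  by rewrite !BfE !Xk_entry (skew_entry (hLskew s) a b) /dl; ring.
have hderk k : is_derive t (1:R) (fun s => Bf k s a b + Bf k s b a) (Bp k a b + Bp k b a).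
  exact: is_deriveD (hB k a b) (hB k b a).
pose q : 'I_d.+1 := Ordinal (blk_le ns b).
have hq : dl q = 2.
  rewrite /dl /sgnk /= eqxx.
  have -> : (blk ns a == blk ns b) = false by apply/negbTE.
  by rewrite opprK.
pose c : R := 2 * dl q.
have c0 : c != 0 by rewrite /c hq; apply/eqP; lra.
have ef : (fun s => Lam s a b) = (fun s => c^-1 * (Bf q s a b + Bf q s b a)).
  by apply/funext => s; rewrite hk -/c mulrA mulVf ?mul1r.
pose phi := c^-1 * (Bp q a b + Bp q b a).
have hf : is_derive t (1:R) (fun s => Lam s a b) phi.
  by rewrite ef; exact: is_deriveMl' (hderk q).
have hk2 k : Bp k a b + Bp k b a = 2 * dl k * phi.
  apply: (is_derive_uniq (hderk k)).
  have -> : (fun s => Bf k s a b + Bf k s b a) = (fun s => 2 * dl k * Lam s a b).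
    by apply/funext => s; rewrite hk.
  exact: is_deriveMl' hf.
have S2 : phi * \sum_k (2 * dl k * dl k) = 0.
  rewrite mulr_sumr; apply: (etrans _ S1); apply: eq_bigr => k _; rewrite hk2; ring.
have pos : 0 < \sum_k (2 * dl k * dl k).
  rewrite (bigD1 q) //= hq.
  apply: (@lt_le_trans _ _ (2 * 2 * 2)); first by lra.
  rewrite lerDl; apply: sumr_ge0 => k _; rewrite -mulrA mulr_ge0 //; exact: mul_self_ge0.
move/eqP: S2; rewrite mulf_eq0 (gt_eqF pos) orbF => /eqP phi0.
exact: is_derive_eq hf phi0.
Qed.

End Main.

End PropHelpers.
Import PropHelpers.

Theorem proposition4p6 (R : realType) (n d : nat) (ns : 'I_d -> nat)
  (hns_pos : forall i, (0 < ns i)%N) (hns_lt : forall i, (ns i < n)%N)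
  (hns_incr : forall i j : 'I_d, (i < j)%N -> (ns i < ns j)%N)
  (V Lam : R -> 'M[R]_n)
  (hVorth : forall t, (V t)^T *m V t = 1%:M)
  (hVdiff : forall t, mx_derivable_at V t)
  (hLskew : forall t, (Lam t)^T = - Lam t)
  (hVdot : forall t, mx_deriv V t = V t *m Lam t)
  (hLdiag : forall t (i j : 'I_n), blk ns i = blk ns j -> Lam t i j = 0) :
  geodesic ns (fun t (k : 'I_d.+1) => V t *m @Jmat R n d ns k *m (V t)^T)
  <-> (forall t, V t = V 0 *m expm (t *: Lam 0)).
Proof.

have hVD t : mxD V t (V t *m Lam t) by rewrite -hVdot; exact: mxD_of.
have hexp t : mxD (fun s => expm (s *: Lam 0)) t (expm (t *: Lam 0) *m Lam 0).
  by move=> i j; exact: expm_is_derive.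
split.
- move=> [g1 [g2 [g3 g4]]].
  have Lconst t : Lam t = Lam 0.
    apply/matrixP => a b.
    have [hab|hab] := eqVneq (blk ns a) (blk ns b).
      by rewrite !hLdiag.
    apply: (@is_derive_0_is_cst _ (fun s => Lam s a b) t 0) => t0.
    exact: (key_deriv hVorth hVD hLskew hLdiag g3 g4 t0 hab).
  have hV0 t : mxD V t (V t *m Lam 0) by rewrite -(Lconst t).
  apply: (ode_unique (hLskew 0) hV0).
    move=> t; apply: mxD_eq; first exact: mxD_mul (mxD_cst _ _) (hexp t).
    by rewrite mul0mx add0r mulmxA.
  by rewrite scale0r expm_zero mulmx1.
- move=> H.
  have [V0 eV0] : exists V0, V 0 = V0 by eexists.
  rewrite eV0 in H.
  have eV : V = (fun s => V0 *m expm (s *: Lam 0)) by apply/funext => s; exact: H.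
  have hV0 t : mxD V t (V t *m Lam 0).
    rewrite {1}eV; apply: mxD_eq; first exact: mxD_mul (mxD_cst _ _) (hexp t).
    by rewrite mul0mx add0r mulmxA -H.
  exact: geo_of_const hVorth (hLskew 0) (hLdiag 0) hV0.
Qed.
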